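(* Let $n\geq 2$ be an integer. Let $(A,\cdot)$ be a unital commutative associative algebra over $\mathbb{C}$ with unit $1$, and let $[\cdot,\ldots,\cdot]:A^n\to A$ be an $n$-ary bracket such that $(A,[\cdot,\ldots,\cdot])$ is an $n$-Lie algebra. Suppose that for all $u_1,\ldots,u_n\in A$, $$[u_1,\ldots,u_n]=\sum_{i=1}^{n}(-1)^{i-1}u_i\,[1,u_1,\ldots,\hat{u}_i,\ldots,u_n]$$ (where $\hat{u}_i$ means that $u_i$ is omitted), and $$[1,u_1u_2,u_3,\ldots,u_n]=u_1[1,u_2,u_3,\ldots,u_n]+u_2[1,u_1,u_3,\ldots,u_n].$$ Then $(A,\cdot,[\cdot,\ldots,\cdot])$ is a strong transposed Poisson $n$-Lie algebra.
   Context: An $n$-Lie algebra is a vector space $L$ with an $n$-linear skew-symmetric bracket $[\cdot,\ldots,\cdot]$ satisfying the generalized Jacobi identity $[[x_1,\ldots,x_n],y_2,\ldots,y_n]=\sum_{i=1}^n[x_1,\ldots,x_{i-1},[x_i,y_2,\ldots,y_n],x_{i+1},\ldots,x_n]$ for all $x_i,y_j\in L$. A transposed Poisson $n$-Lie algebra is a triple $(A,\cdot,[\cdot,\ldots,\cdot])$ where $(A,\cdot)$ is a commutative associative algebra, $(A,[\cdot,\ldots,\cdot])$ is an $n$-Lie algebra, and for all $h,a_1,\ldots,a_n\in A$: $n\,h\,[a_1,\ldots,a_n]=\sum_{i=1}^n[a_1,\ldots,h a_i,\ldots,a_n]$ (with $ha_i$ in the $i$-th slot). It is called strong if moreover for all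 $h,y_1,y_2,x_1,\ldots,x_{n-1}\in A$: $$y_1[hy_2,x_1,\ldots,x_{n-1}]-y_2[hy_1,x_1,\ldots,x_{n-1}]+\sum_{i=1}^{n-1}(-1)^{i-1}hx_i[y_1,y_2,x_1,\ldots,\hat{x}_i,\ldots,x_{n-1}]=0.$$ *)

(* Defs.v *)
From HB Require Import structures.
From mathcomp Require Import all_boot all_order all_algebra all_fingroup.
From mathcomp Require Import complex Rstruct.
From Stdlib Require Import Rdefinitions.
Set Implicit Arguments. Unset Strict Implicit. Unset Printing Implicit Defensive.
Import Order.TTheory GRing.Theory Num.Theory.
Local Open Scope ring_scope.

Notation CC := (complex R).


Section NLie.
Variables (K : fieldType) (A : comAlgType K) (n : nat).
(* An n-ary bracket is a map A^n -> A, arguments indexed by 'I_n (slot i = x_{i+1}). *)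
Variable br : ('I_n -> A) -> A.

Definition setslot (f : 'I_n -> A) (i : 'I_n) (a : A) : 'I_n -> A :=
  fun j => if j == i then a else f j.
Definition set0slot (a : A) (f : 'I_n -> A) : 'I_n -> A :=
  fun j => if val j == 0%N then a else f j.
Definition set01slot (a b : A) (f : 'I_n -> A) : 'I_n -> A :=
  fun j => if val j == 0%N then a else if val j == 1%N then b else f j.
(* (a, u_0, ..., \hat{u_i}, ..., u_{n-1})  (0-based indexing of u) *)
Definition omit_front (a : A) (u : 'I_n -> A) (i : 'I_n) : 'I_n -> A :=
  fun j => if val j == 0%N then a else u (insubd j (bump i (val j).-1)).
(* (a, b, x_1, ..., \hat{x_i}, ..., x_{n-1})  for 1 <= i <= n-1; slot 0 of x unused *)
Definition omit_front2 (a b : A) (x : 'I_n -> A) (i : 'I_n) : 'I_n -> A :=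
  fun j => if val j == 0%N then a else if val j == 1%N then b
           else x (insubd j (bump i (val j).-1)).

Definition nlinear : Prop :=
  forall (f : 'I_n -> A) (i : 'I_n) (c : K) (a b : A),
    br (setslot f i (c *: a + b)) = c *: br (setslot f i a) + br (setslot f i b).

Definition skew_symmetric : Prop :=
  forall (s : {perm 'I_n}) (f : 'I_n -> A),
    br (fun j => f (s j)) = (-1) ^+ (odd_perm s) * br f.

(* [[x_1..x_n], y_2..y_n] = sum_i [x_1,..,[x_i,y_2..y_n],..,x_n];
   y is given as a map 'I_n -> A whose slot 0 is ignored. *)
Definition gen_jacobi : Prop :=
  forall x y : 'I_n -> A,
    br (set0slot (br x) y) = \sum_(i < n) br (setslot x i (br (set0slot (x i) y))).

Definition is_nLie : Prop := [/\ nlinear, skew_symmetric & gen_jacobi].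

Definition transposed_identity : Prop :=
  forall (h : A) (a : 'I_n -> A),
    n%:R * h * br a = \sum_(i < n) br (setslot a i (h * a i)).

Definition is_transposed_Poisson_nLie : Prop := is_nLie /\ transposed_identity.

(* strong condition: x_1..x_{n-1} are the slots 1..n-1 of x (slot 0 unused) *)
Definition strong_identity : Prop :=
  forall (h y1 y2 : A) (x : 'I_n -> A),
    y1 * br (set0slot (h * y2) x) - y2 * br (set0slot (h * y1) x)
    + \sum_(i < n | val i != 0%N)
        (-1) ^+ (val i).-1 * h * x i * br (omit_front2 y1 y2 x i) = 0.

Definition is_strong_transposed_Poisson_nLie : Prop :=
  is_transposed_Poisson_nLie /\ strong_identity.
End NLie.

(* Main.v *)
Require Import Defs.
From HB Require Import structures.
From mathcomp Require Import all_boot all_order all_algebra all_fingroup.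
From mathcomp Require Import complex Rstruct.
From Stdlib Require Import Rdefinitions.
From Stdlib Require Import FunctionalExtensionality.
From mathcomp Require Import zify ring.
Import GRing.Theory Num.Theory.
Local Open Scope ring_scope.

Section Aux.
Variable n : nat.
Variable A : comAlgType CC.
Variable br : ('I_n -> A) -> A.
Hypothesis skew : skew_symmetric br.

Lemma setslot_eq (f : 'I_n -> A) i a : setslot f i a i = a.
Proof. by rewrite /setslot eqxx. Qed.
Lemma setslot_neq (f : 'I_n -> A) i j a : j != i -> setslot f i a j = f j.
Proof. by rewrite /setslot => /negbTE ->. Qed.
Lemma setslot_same (f : 'I_n -> A) i a b : setslot (setslot f i a) i b = setslot f i b.
Proof. apply: functional_extensionality => j; rewrite /setslot; by case: (j == i). Qed.
Lemma setslot_id (f : 'I_n -> A) i : setslot f i (f i) = f.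
Proof. apply: functional_extensionality => j; rewrite /setslot; by case: eqP => [->|]. Qed.
Lemma setslot_comm (f : 'I_n -> A) i j a b : i != j ->
  setslot (setslot f i a) j b = setslot (setslot f j b) i a.
Proof.
move=> ij; apply: functional_extensionality => k; rewrite /setslot.
case: (eqVneq k j) => [->|kj]; first by rewrite eq_sym (negbTE ij).
by [].
Qed.

Lemma skew_swap (f : 'I_n -> A) i j : i != j ->
  br (fun x => f (tperm i j x)) = - br f.
Proof. move=> ij; by rewrite skew odd_tperm ij expr1 mulN1r. Qed.

Lemma swap2 (f : 'I_n -> A) i j a b : i != j ->
  br (setslot (setslot f i a) j b) = - br (setslot (setslot f i b) j a).
Proof.
move=> ij; rewrite -(skew_swap _ _ _ ij); congr br; apply: functional_extensionality => x.
rewrite /setslot.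
case: (eqVneq x i) => [->|xi]; first by rewrite tpermL eqxx; case: eqP ij => // ->; rewrite eqxx.
case: (eqVneq x j) => [->|xj]; first by rewrite tpermR eqxx; case: eqP ij => // ->; rewrite eqxx.
have -> : tperm i j x = x by rewrite tpermD // eq_sym.
by case: eqP xi => //; case: eqP xj.
Qed.

Lemma two_zero (x : A) : x = - x -> x = 0.
Proof.
move=> h; have : (2%:R : CC) *: x = 0 by rewrite scaler_nat mulr2n {2}h subrr.
move/eqP; rewrite scaler_eq0 pnatr_eq0 /=; by move/eqP.
Qed.

Lemma br_two_ones (f : 'I_n -> A) i j : i != j -> f i = f j -> br f = 0.
Proof.
move=> ij fij; apply: two_zero; rewrite -(skew_swap f _ _ ij); congr br.
apply: functional_extensionality => x.
case: (eqVneq x i) => [->|xi]; first by rewrite tpermL.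
case: (eqVneq x j) => [->|xj]; first by rewrite tpermR.
have -> : tperm i j x = x by rewrite tpermD // eq_sym.
by [].
Qed.

Lemma antisym_sum (c : 'I_n -> 'I_n -> A) :
  (forall i j, i != j -> c i j = - c j i) ->
  \sum_(i < n) \sum_(j < n | j != i) c i j = 0.
Proof.
move=> hc; apply: two_zero.
rewrite (eq_bigr (fun i => \sum_(j < n) (if j != i then c i j else 0))); last first.
  by move=> i _; rewrite big_mkcond.
rewrite {1}exchange_big /= -sumrN; apply: eq_bigr => j _.
rewrite -sumrN; apply: eq_bigr => i _.
rewrite eq_sym; case: eqP => [_|/eqP h]; first by rewrite oppr0.
by rewrite hc // opprK.
Qed.

Lemma vE (j : 'I_n) : val j = nat_of_ord j.
Proof. by []. Qed.

Lemma val_insubd_lt (x : 'I_n) (k : nat) : (k < n)%nat -> val (insubd x k) = k.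
Proof. by move=> h; rewrite val_insubd h. Qed.

Lemma omitL m (hm : (m < n)%nat) u c :
  br (omit_front c u (Ordinal hm)) = (-1) ^+ m * br (setslot u (Ordinal hm) c).
Proof.
elim: m hm u => [|m IH] hm u.
  rewrite expr0 mul1r; congr br; apply: functional_extensionality => x.
  rewrite /omit_front /setslot.
  have -> : (x == Ordinal hm) = (val x == 0%nat) by [].
  case: eqP => // hx; congr u; apply: val_inj.
  have hx' : (0 < val x)%nat by rewrite lt0n; apply/eqP.
  by rewrite val_insubd_lt /bump /= add1n prednK // ltn_ord.
have hm' : (m < n)%nat by apply: ltnW.
pose i' := Ordinal hm'; pose i1 := Ordinal hm.
have ne : i' != i1 by apply/eqP => /(congr1 val) /= /eqP; rewrite -[m.+1]addn1 -{1}[m]addn0 eqn_add2l.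
pose t := tperm i' i1.
have C1 : omit_front c u i1 = omit_front c (fun x => u (t x)) i'.
  apply: functional_extensionality => x; rewrite /omit_front.
  case: eqP => // hx; congr u; apply: val_inj.
  have hx' : (0 < val x)%nat by rewrite lt0n; apply/eqP.
  have ltx : (val x < n)%nat := ltn_ord x.
  set w := insubd x (bump m (val x).-1).
  have Hw : val w = bump m (val x).-1 by rewrite val_insubd_lt // /bump; lia.
  rewrite val_insubd_lt; last by rewrite /bump; lia.
  rewrite /t; case: tpermP => [h|h|h1 h2].
  - move/(congr1 val): h; rewrite Hw /= /bump; lia.
  - move/(congr1 val): h; rewrite Hw /= /bump; lia.
  - have h1' : val w <> m by move=> e; apply: h1; apply: val_inj.
    have h2' : val w <> m.+1 by move=> e; apply: h2; apply: val_inj.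
    move: h1' h2'; rewrite Hw /bump /=; lia.
have C2 : setslot (fun x => u (t x)) i' c = (fun x => setslot u i1 c (t x)).
  apply: functional_extensionality => x; rewrite /setslot.
  case: (eqVneq x i') => [->|xi]; first by rewrite /t tpermL eqxx.
  case: eqP => // e; exfalso; move: xi; rewrite -(tpermK i' i1 x).
  by rewrite -/t e tpermR eqxx.
by rewrite C1 (IH hm') C2 skew_swap // exprS mulN1r mulrN mulNr.
Qed.

Lemma omitL' (i : 'I_n) u c :
  br (omit_front c u i) = (-1) ^+ (val i) * br (setslot u i c).
Proof. by case: i => m hm; rewrite omitL. Qed.

Hypothesis h2 : forall (u1 u2 : A) (u : 'I_n -> A),
      br (set01slot 1 (u1 * u2) u)
      = u1 * br (set01slot 1 u2 u) + u2 * br (set01slot 1 u1 u).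

Lemma deriv (i0 i1 : 'I_n) (v0 : val i0 = 0%nat) (v1 : val i1 = 1%nat) f j k a b :
  j != k ->
  br (setslot (setslot f j 1) k (a * b))
  = a * br (setslot (setslot f j 1) k b) + b * br (setslot (setslot f j 1) k a).
Proof.
move=> jk.
pose p := tperm i0 j. pose q := tperm i1 (p k). pose s := (q * p)%g.
have i10 : i1 != i0 by apply/eqP => /(congr1 val); rewrite v0 v1.
have pk0 : p k != i0.
  apply/eqP => e; have : k = p i0 by rewrite -e tpermK.
  by rewrite tpermL => e'; rewrite e' eqxx in jk.
have s0 : s i0 = j by rewrite permM /q (tpermD i10 pk0) /p tpermL.
have s1 : s i1 = k by rewrite permM tpermL /p tpermK.
pose g := fun c => setslot (setslot f j 1) k c.
have E : forall c, (fun x => g c (s x)) = set01slot 1 c (fun x => g 0 (s x)).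
  move=> c; apply: functional_extensionality => x; rewrite /set01slot.
  case: (eqVneq x i0) => [->|x0].
    by rewrite v0 eqxx s0 /g setslot_neq ?setslot_eq.
  have xv0 : (val x == 0%nat) = false.
    by apply/negbTE; apply: contra x0 => /eqP h; apply/eqP/val_inj; rewrite /= h v0.
  case: (eqVneq x i1) => [->|x1].
    by rewrite v1 /= s1 /g setslot_eq.
  have xv1 : (val x == 1%nat) = false.
    by apply/negbTE; apply: contra x1 => /eqP h; apply/eqP/val_inj; rewrite /= h v1.
  rewrite xv0 xv1 /g.
  have sj : s x != j by rewrite -s0 (inj_eq perm_inj).
  have sk : s x != k by rewrite -s1 (inj_eq perm_inj).
  by rewrite !setslot_neq.
have key := h2 a b (fun x => g 0 (s x)).
rewrite -!E !skew in key.
move: key; rewrite /g.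
case: (odd_perm s) => /=; rewrite ?expr1 ?expr0 ?mul1r ?mulN1r //.
by rewrite !mulrN -opprD => /oppr_inj.
Qed.

Hypothesis h1 : forall u : 'I_n -> A,
      br u = \sum_(i < n) (-1) ^+ (val i) * u i * br (omit_front 1 u i).

Lemma sgn2 m : (-1) ^+ m * (-1) ^+ m = 1 :> A.
Proof. by rewrite -exprD addnn -mul2n exprM sqrrN expr1n expr1n. Qed.

Lemma h1s u : br u = \sum_(i < n) u i * br (setslot u i 1).
Proof.
rewrite h1; apply: eq_bigr => -[m hm] _ /=.
by rewrite omitL mulrCA -mulrA mulrA sgn2 mul1r.
Qed.

Lemma transp (i0 i1 : 'I_n) (v0 : val i0 = 0%nat) (v1 : val i1 = 1%nat) :
  transposed_identity br.
Proof.
move=> h a.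
pose Q j := br (setslot a j 1).
pose R i j := br (setslot (setslot a j 1) i h).
have E1 : forall i, br (setslot a i (h * a i)) =
   h * (a i * Q i) + \sum_(j < n | j != i) h * (a j * Q j)
   + \sum_(j < n | j != i) a j * a i * R i j.
  move=> i; rewrite h1s (bigD1 i) //= setslot_eq setslot_same -addrA; congr (_ + _).
    by rewrite mulrA.
  rewrite -big_split /=; apply: eq_bigr => j ji.
  rewrite setslot_neq // setslot_comm 1?eq_sym // (deriv _ _ v0 v1) //.
  rewrite [setslot (setslot a j 1) i (a i)](setslot_comm _ _ _ _ _ ji) setslot_id.
  by rewrite /Q /R; ring.
rewrite (eq_bigr _ (fun i _ => E1 i)) !big_split /=.
have AS : \sum_(i < n) \sum_(j < n | j != i) a j * a i * R i j = 0.
  apply: antisym_sum => i j ij; have ji : j != i by rewrite eq_sym.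
  rewrite /R (swap2 _ _ _ _ _ ji) (setslot_comm _ _ _ _ _ ji); ring.
rewrite AS addr0.
have E2 : forall i, \sum_(j < n | j != i) h * (a j * Q j)
   = \sum_(j < n) h * (a j * Q j) - h * (a i * Q i).
  by move=> i; rewrite [in RHS](bigD1 i) //= addrAC subrr add0r.
rewrite (eq_bigr _ (fun i _ => E2 i)) sumrB sumr_const card_ord -mulr_sumr -h1s.
rewrite -mulr_natl; ring.
Qed.

Lemma sgn_term m (a b : A) : (-1) ^+ m * a * ((-1) ^+ m.+1 * b) = - (a * b).
Proof. by rewrite exprS mulN1r mulNr mulrN mulrACA sgn2 mul1r. Qed.

Lemma strongL (i0 i1 : 'I_n) (v0 : val i0 = 0%nat) (v1 : val i1 = 1%nat) :
  strong_identity br.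
Proof.
move=> h y1 y2 x.
have S0 : forall c, set0slot c x = setslot x i0 c.
  move=> c; apply: functional_extensionality => j; rewrite /set0slot /setslot.
  by rewrite -val_eqE v0.
rewrite !S0.
pose Ay y k := br (setslot (setslot x k 1) i0 y).
pose W i k := br (setslot (setslot (setslot x i0 y2) i y1) k 1).
have SA : forall y, br (setslot x i0 (h * y)) = h * y * br (setslot x i0 1)
    + \sum_(k < n | k != i0) x k * (h * Ay y k + y * Ay h k).
  move=> y; rewrite h1s (bigD1 i0) //= setslot_eq setslot_same; congr (_ + _).
  apply: eq_bigr => k k0; have k0' : i0 != k by rewrite eq_sym.
  by rewrite setslot_neq // (setslot_comm _ _ _ _ _ k0') (deriv _ _ v0 v1).
have SA2 : y1 * br (setslot x i0 (h * y2)) - y2 * br (setslot x i0 (h * y1))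
    = \sum_(k < n | k != i0) h * x k * (y1 * Ay y2 k - y2 * Ay y1 k).
  rewrite !SA !mulrDr !mulr_sumr.
  have -> : y1 * (h * y2 * br (setslot x i0 1)) = y2 * (h * y1 * br (setslot x i0 1)) by ring.
  rewrite opprD addrACA subrr add0r -sumrB; apply: eq_bigr => k _; ring.
have SB : forall i, i != i0 ->
    (-1) ^+ (val i).-1 * h * x i * br (omit_front2 y1 y2 x i)
    = - (h * x i * (y1 * Ay y2 i - y2 * Ay y1 i))
      - \sum_(k < n | (k != i0) && (k != i)) h * x i * (x k * W i k).
  move=> i ii0.
  have ip : (0 < val i)%nat.
    by rewrite lt0n; apply: contra ii0 => /eqP e; apply/eqP/val_inj; rewrite e v0.
  have Ea : omit_front2 y1 y2 x i = omit_front y1 (setslot x i0 y2) i.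
    apply: functional_extensionality => j; rewrite /omit_front2 /omit_front.
    case: eqP => // hj0.
    have hj0' : (0 < val j)%nat by rewrite lt0n; apply/eqP.
    have ltj : (val j < n)%nat := ltn_ord j.
    have ip' : (0 < i)%nat := ip.
    have ib : (i <= 0)%nat = false by rewrite leqNgt ip'.
    case: eqP => hj1.
      have -> : insubd j (bump i (val j).-1) = i0.
        apply: val_inj; rewrite hj1 v0 val_insubd_lt /bump /= ib //; lia.
      by rewrite setslot_eq.
    have hj1' : val j <> 1%nat by [].
    rewrite setslot_neq //; apply/eqP => /(congr1 val); rewrite v0 val_insubd.
    have ltj' : (j < n)%nat := ltj.
    have hj0'' : (0 < j)%nat := hj0'.
    have hj1'' : nat_of_ord j <> 1%nat := hj1'.
    rewrite !vE; case: ifP => _; rewrite /bump; lia.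
  have Eb : br (omit_front y1 (setslot x i0 y2) i)
      = (-1) ^+ (val i) * br (setslot (setslot x i0 y2) i y1).
    by rewrite omitL'.
  have Es : (-1) ^+ (val i) = (-1) ^+ ((val i).-1).+1 :> A by rewrite prednK.
  rewrite Ea Eb Es -(mulrA _ h) sgn_term.
  rewrite h1s (bigD1 i0) //= (bigD1 i) //=.
  rewrite setslot_neq 1?eq_sym // setslot_eq setslot_eq.
  rewrite (setslot_comm _ _ _ _ _ ii0) setslot_same.
  rewrite (swap2 _ _ _ _ _ (_ : i0 != i)) 1?eq_sym //.
  rewrite (setslot_comm _ _ _ _ _ (_ : i0 != i)) 1?eq_sym //.
  rewrite setslot_same (setslot_comm _ _ _ _ _ (_ : i0 != i)) 1?eq_sym //.

  have -> : \sum_(k < n | (k != i0) && (k != i))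
      setslot (setslot x i0 y2) i y1 k * br (setslot (setslot (setslot x i0 y2) i y1) k 1)
      = \sum_(k < n | (k != i0) && (k != i)) x k * W i k.
    by apply: eq_bigr => k /andP [k0 ki]; rewrite !setslot_neq.
  rewrite -mulr_sumr /Ay; ring.
have SC : \sum_(i < n | i != i0) \sum_(k < n | (k != i0) && (k != i))
      h * x i * (x k * W i k) = 0.
  pose c i k := if (i != i0) && (k != i0) then h * x i * (x k * W i k) else 0.
  rewrite -[RHS](@antisym_sum c); last first.
    move=> i k ik; rewrite /c; case: (i != i0); case: (k != i0) => /=; rewrite ?oppr0 //.
    rewrite /W swap2 // (setslot_comm _ _ _ _ _ ik); ring.
  rewrite big_mkcond [RHS]big_mkcond; apply: eq_bigr => i _.
  rewrite /c; case: (i != i0) => /=.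
    by rewrite big_mkcond [RHS]big_mkcond; apply: eq_bigr => k _; case: (k != i0); case: (k != i).
  by rewrite big1.
have SB' : forall i : 'I_n, val i != 0%nat ->
    (-1) ^+ (val i).-1 * h * x i * br (omit_front2 y1 y2 x i)
    = - (h * x i * (y1 * Ay y2 i - y2 * Ay y1 i))
      - \sum_(k < n | (k != i0) && (k != i)) h * x i * (x k * W i k).
  move=> i hi; apply: SB; apply: contra hi => /eqP ->; by rewrite v0.
rewrite SA2 (eq_bigr _ SB').
rewrite sumrB sumrN.
have -> : \sum_(i < n | val i != 0%nat) h * x i * (y1 * Ay y2 i - y2 * Ay y1 i)
   = \sum_(k < n | k != i0) h * x k * (y1 * Ay y2 k - y2 * Ay y1 k).
  by apply: eq_bigl => i; rewrite -v0 val_eqE.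
have -> : \sum_(i < n | val i != 0%nat) \sum_(k < n | (k != i0) && (k != i))
      h * x i * (x k * W i k)
   = \sum_(i < n | i != i0) \sum_(k < n | (k != i0) && (k != i)) h * x i * (x k * W i k).
  by apply: eq_bigl => i; rewrite -v0 val_eqE.
by rewrite SC subr0 addrN.
Qed.
End Aux.


Theorem mainTheorem1 (n : nat) (hn : leq 2 n) (A : comAlgType CC)
  (br : ('I_n -> A) -> A)
  (hLie : is_nLie br)
  (h1 : forall u : 'I_n -> A,
      br u = \sum_(i < n) (-1) ^+ (val i) * u i * br (omit_front 1 u i))
  (h2 : forall (u1 u2 : A) (u : 'I_n -> A),
      br (set01slot 1 (u1 * u2) u)
      = u1 * br (set01slot 1 u2 u) + u2 * br (set01slot 1 u1 u)) :
  is_strong_transposed_Poisson_nLie br.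
Proof.
case: (hLie) => lin skew jac.
have h0 : (0 < n)%nat := ltnW hn.
pose i0 := Ordinal h0; pose i1 := Ordinal hn.
split; first split => //.
  exact: (@transp n A br skew h2 h1 i0 i1 erefl erefl).
exact: (@strongL n A br skew h2 h1 i0 i1 erefl erefl).
Qed.
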